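(* (Advantage of the fewer.) Fix $M$, $p$, $q$, $\mu$ as in the context, take attention bias $\alpha=1$ and a preference for like-minded news $\gamma$ with $0<\gamma<1$, and use the limit interim efficiencies $\mathcal P_L$ defined in the context (uniform initial ranking, $N,\kappa\to\infty$). For $j\in\{0,1,\dots,M\}$ let $$Q^{\mathrm{corr}}(j)=\mathcal P_j,\qquad Q^{\mathrm{inc}}(j)=1-\mathcal P_{M-j},$$ which are, respectively, the limit total probability that a searcher clicks on one of the websites in a set $J$ of $j$ websites all carrying the correct signal, or all carrying the incorrect signal (the remaining $M-j$ websites carrying the other signal). Then for every $j\in\{1,2,\dots,M-2\}$ with $j\neq \frac{M-1}{2}$, $$Q^{\mathrm{corr}}(j+1)\le Q^{\mathrm{corr}}(j)\quad\text{and}\quad Q^{\mathrm{inc}}(j+1)\le Q^{\mathrm{inc}}(j),$$ i.e. the limit total clicking probability on all websites carrying a fixed signal is (weakly) decreasing in the number $\#J$ of such websites whenever $\#J\notin\{0,\frac{M-1}{2},M-1\}$.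
   Context: Model. There are $M$ websites ($M\ge 3$ odd) and a binary state $\omega$. Each website carries a fixed signal $y_m\in\{0,1\}$; $L\in\{0,\dots,M\}$ denotes the number of websites whose signal is correct ($y_m=\omega$). The set of websites carrying the signal held by a strict majority of websites is $K$. Parameters: $p\in(\tfrac12,1)$ (accuracy of a searcher's private signal $x_n$ about $\omega$), $q\in(\tfrac12,1)$ (accuracy of each website's signal), $\mu\in(\tfrac12,1]$ (accuracy of a searcher's signal $z_n$ about the website-majority signal), with $\mu q>p$; $\gamma\in[0,1]$ (preference for like-minded news); $\alpha\ge 0$ (attention bias; the baseline model has $\alpha=1$). Searchers arrive one at a time; a searcher with signals $(x_n,z_n)$ facing ranking $r\in\Delta(M)$ clicks website $m$ with probability $\rho_m=r_m^\alpha v^*_m/\sum_{m'}r_{m'}^\alpha v^*_{m'}$, where $v^*_m$ equals $1/[m]$ if $y_m=x_n=z_n$, $\gamma/[m]$ if $y_m=x_n\ne z_n$, $(1-\gamma)/[m]$ if $y_m=z_n\neq x_n$, and $0$ otherwise, with $[m]$ the number of websites carrying the same signal as $m$. The popularity ranking is updated by $r_{t,m}=\frac{\kappa}{\kappa+1}r_{t-1,m}+\frac{1}{\kappa+1}\rho_{t-1,m}$. Reduced limit dynamics (operative definitions). Call $L$ a minority if $1\le L\le\frac{M-1}{2}$ and a majority if $\frac{M+1}{2}\le L\le M-1$. Writing $u=(x/L)^\alpha$, $w=((1-x)/(M-L))^\alpha$, define for $x\in[0,1]$ $$\theta_L(x)=p(1-\mu)+\frac{p\mu\gamma u}{\gamma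 u+(1-\gamma)w}+\frac{(1-p)(1-\mu)(1-\gamma)u}{(1-\gamma)u+\gamma w}\quad\text{($L$ minority)},$$ $$\theta_L(x)=p\mu+\frac{p(1-\mu)\gamma u}{\gamma u+(1-\gamma)w}+\frac{(1-p)\mu(1-\gamma)u}{(1-\gamma)u+\gamma w}\quad\text{($L$ majority)}.$$ $\theta_L(x)$ is the expected total probability that a searcher clicks a correct-signal website when the total ranking mass on the $L$ correct-signal websites is $x$, spread evenly among them. The limit interim efficiency (limit probability, as the number of searchers $N$ and persistence $\kappa$ go to infinity, in the mean-dynamics approximation, that a searcher clicks a correct-signal website, starting from the uniform initial ranking) is $\mathcal P_L=\lim_{t\to\infty}X(t)$, where $X$ solves $\dot X=\theta_L(X)-X$, $X(0)=L/M$; and $\mathcal P_0=0$, $\mathcal P_M=1$. Note $\theta_L(\mathcal P_L)=\mathcal P_L$ for $1\le L\le M-1$. *)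

(* Defs.v *)
From Stdlib Require Import Reals Lra.
Open Scope R_scope.

(* theta_L(x) with attention bias alpha = 1:
   u = x / L, w = (1 - x) / (M - L). *)
Definition theta1 (M L : nat) (p mu gamma x : R) : R :=
  let u := x / INR L in
  let w := (1 - x) / (INR M - INR L) in
  if (2 * L <=? M - 1)%nat then
    (* L minority *)
    p * (1 - mu)
    + p * mu * gamma * u / (gamma * u + (1 - gamma) * w)
    + (1 - p) * (1 - mu) * (1 - gamma) * u / ((1 - gamma) * u + gamma * w)
  else
    (* L majority *)
    p * mu
    + p * (1 - mu) * gamma * u / (gamma * u + (1 - gamma) * w)
    + (1 - p) * mu * (1 - gamma) * u / ((1 - gamma) * u + gamma * w).

Definition solves_limit_ode (M L : nat) (p mu gamma : R) (X : R -> R) : Prop :=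
  X 0 = INR L / INR M /\
  (forall eps, 0 < eps -> exists delta, 0 < delta /\
     forall t, 0 <= t < delta -> Rabs (X t - X 0) < eps) /\
  (forall t, 0 < t -> derivable_pt_lim X t (theta1 M L p mu gamma (X t) - X t)).

Definition tends_at_infty (f : R -> R) (l : R) : Prop :=
  forall eps, 0 < eps -> exists T, forall t, T <= t -> Rabs (f t - l) < eps.

Definition is_limit_efficiency (M : nat) (p mu gamma : R) (P : nat -> R) : Prop :=
  P 0%nat = 0 /\ P M = 1 /\
  forall L, (1 <= L <= M - 1)%nat ->
    exists X : R -> R, solves_limit_ode M L p mu gamma X /\ tends_at_infty X (P L).

Definition Qcorr (P : nat -> R) (j : nat) : R := P j.
Definition Qinc (M : nat) (P : nat -> R) (j : nat) : R := 1 - P (M - j)%nat.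

(* Main.v *)
Require Import Defs.
From Stdlib Require Import Reals Arith.
From Stdlib Require Import Lra Lia Classical FunctionalExtensionality.
Open Scope R_scope.

Lemma cont_eps f x : continuity_pt f x -> forall eps, 0 < eps ->
  exists d, 0 < d /\ forall y, Rabs (y - x) < d -> Rabs (f y - f x) < eps.
Proof.
  intros H eps He. destruct (H eps He) as [d [Hd Hy]]. exists d; split; [lra|].
  intros y Hyx. destruct (Req_dec y x) as [->|Hne].
  - rewrite Rminus_diag, Rabs_R0; lra.
  - apply (Hy y). split; [split; [exact I| auto] | exact Hyx].
Qed.

Definition RC (f : R -> R) (t : R) : Prop :=
  forall eps, 0 < eps -> exists del, 0 < del /\
    forall s, t <= s < t + del -> Rabs (f s - f t) < eps.

Lemma cont_RC f t : continuity_pt f t -> RC f t.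
Proof.
  intros H eps He. destruct (cont_eps f t H eps He) as [d [Hd Hy]].
  exists d; split; auto. intros s Hs. apply Hy. rewrite Rabs_right; lra.
Qed.

Lemma Zder (X:R->R) t (d:R) K c : derivable_pt_lim X t d -> derivable_pt_lim (fun s => (X s - c) * exp (-K*s)) t ((d - K*(X t - c))*exp(-K*t)).
Proof.
intros H.
assert (H1 := derivable_pt_lim_minus X (fct_cte c) t d 0 H (derivable_pt_lim_const c t)).
assert (H2 : derivable_pt_lim (mult_real_fct (-K) id) t (-K * 1)).
{ apply derivable_pt_lim_scal. apply derivable_pt_lim_id. }
assert (H3 := derivable_pt_lim_comp _ _ t _ _ H2 (derivable_pt_lim_exp _)).
assert (H4 := derivable_pt_lim_mult _ _ t _ _ H1 H3).
replace ((d - K*(X t - c))*exp(-K*t)) with ((d - 0) * comp exp (mult_real_fct (- K) id) t +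
       (X - fct_cte c)%F t * (exp (mult_real_fct (- K) id t) * (- K * 1))).
exact H4.
unfold comp, mult_real_fct, id, minus_fct, fct_cte. ring.
Qed.

Lemma exp_le1 x : x <= 0 -> exp x <= 1.
Proof.
  intros H. rewrite <- exp_0. destruct (Req_dec x 0) as [->|H']; [lra|].
  left. apply exp_increasing. lra.
Qed.

Lemma BL (X d : R -> R) (c del K : R) :
  (forall t, 0 <= t -> RC X t) ->
  (forall t, 0 < t -> derivable_pt_lim X t (d t)) ->
  0 < del -> 0 <= K -> X 0 <= c ->
  (forall t, 0 < t -> c < X t < c + del -> d t <= K * (X t - c)) ->
  forall t, 0 <= t -> X t <= c.
Proof.
  intros HRC Hd Hdel HK H0 Hband t1 Ht1.
  destruct (Rle_or_lt (X t1) c) as [|Hgt]; [assumption|exfalso].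
  assert (Ht1p : 0 < t1).
  { destruct (Req_dec t1 0) as [->|]; lra. }
  set (E := fun t => 0 <= t <= t1 /\ X t <= c).
  assert (Hb : bound E). { exists t1. intros x [Hx _]. lra. }
  assert (Hne : exists x, E x). { exists 0. split; lra. }
  destruct (completeness E Hb Hne) as [sg [Hub Hlub]].
  assert (Hs0 : 0 <= sg). { apply Hub. split; lra. }
  assert (Hs1 : sg <= t1). { apply Hlub. intros x [Hx _]. lra. }
  assert (HXs : X sg <= c).
  { destruct (Rle_or_lt (X sg) c) as [|Hc]; [assumption|exfalso].
    destruct (Req_dec sg 0) as [Hz|Hz]. { rewrite Hz in Hc. lra. }
    assert (Hcont : continuity_pt X sg).
    { apply derivable_continuous_pt. exists (d sg). apply Hd. lra. }
    destruct (cont_eps X sg Hcont (X sg - c)) as [e [He Hy]]; [lra|].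
    assert (Hnub : ~ is_upper_bound E (sg - e/2)).
    { intro Hu. specialize (Hlub _ Hu). lra. }
    apply Hnub. intros x Ex. destruct (Rle_or_lt x (sg - e/2)) as [|Hx]; [assumption|].
    exfalso. destruct Ex as [Ex1 Ex2]. assert (x <= sg) by (apply Hub; split; auto).
    assert (Rabs (X x - X sg) < X sg - c) as H3.
    { apply Hy. rewrite Rabs_left1; lra. }
    apply Rabs_def2 in H3. lra. }
  assert (Hlt : sg < t1). { destruct (Req_dec sg t1) as [Heq|]; [rewrite Heq in HXs; lra| lra]. }
  assert (Hab : forall t, sg < t <= t1 -> c < X t).
  { intros t Ht. destruct (Rle_or_lt (X t) c) as [Hle|]; [|assumption].
    assert (t <= sg) by (apply Hub; split; [lra|assumption]). lra. }
  destruct (HRC sg Hs0 del Hdel) as [e1 [He1 Hy1]].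
  set (tau := Rmin (sg + e1/2) t1).
  assert (Htau : sg < tau <= t1).
  { unfold tau. split; [apply Rmin_glb_lt; lra| apply Rmin_r]. }
  assert (Htau2 : tau <= sg + e1/2) by apply Rmin_l.
  assert (Hband2 : forall t, sg < t <= tau -> c < X t < c + del).
  { intros t Ht. split. apply Hab; lra.
    assert (Rabs (X t - X sg) < del).
    { apply Hy1. split; lra. }
    apply Rabs_def2 in H. lra. }
  set (Z := fun s => (X s - c) * exp (-K*s)).
  assert (HZt : 0 < Z tau).
  { unfold Z. apply Rmult_lt_0_compat; [|apply exp_pos]. assert (c < X tau) by (apply Hab; lra). lra. }
  destruct (HRC sg Hs0 (Z tau) HZt) as [e2 [He2 Hy2]].
  set (s := sg + Rmin e2 (tau - sg) / 2).
  assert (Hs : sg < s < tau /\ s < sg + e2).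
  { unfold s. assert (0 < Rmin e2 (tau - sg)) by (apply Rmin_glb_lt; lra).
    assert (Rmin e2 (tau - sg) <= e2) by apply Rmin_l.
    assert (Rmin e2 (tau - sg) <= tau - sg) by apply Rmin_r. lra. }
  assert (HZs : Z s < Z tau).
  { assert (Rabs (X s - X sg) < Z tau) as Ha by (apply Hy2; lra).
    assert (c < X s) by (apply Hab; lra).
    assert (Hq : X s - c < Z tau).
    { apply Rabs_def2 in Ha. lra. }
    assert (He : exp (-K*s) <= 1) by (apply exp_le1; nra).
    assert (0 < exp (-K*s)) by apply exp_pos.
    assert ((X s - c) * exp (-K*s) <= (X s - c) * 1).
    { apply Rmult_le_compat_l; lra. }
    unfold Z at 1. lra. }
  destruct (MVT_cor2 Z (fun t => (d t - K*(X t - c))*exp(-K*t)) s tau) as [xi [Hxi1 Hxi2]].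
  - lra.
  - intros x Hx. unfold Z. apply Zder. apply Hd. lra.
  - assert (d xi <= K * (X xi - c)) by (apply Hband; [lra| apply Hband2; lra]).
    assert (0 < exp (-K*xi)) by apply exp_pos.
    assert ((d xi - K*(X xi - c))*exp(-K*xi) * (tau - s) <= 0).
    { assert (0 <= (K * (X xi - c) - d xi) * exp (-K*xi)) by (apply Rmult_le_pos; lra).
      assert (0 <= ((K * (X xi - c) - d xi) * exp (-K*xi)) * (tau - s)) by (apply Rmult_le_pos; lra).
      lra. }
    lra.
Qed.

Lemma lim_le X s c : tends_at_infty X s -> (forall t, 0 <= t -> X t <= c) -> s <= c.
Proof.
  intros Hl Hb. destruct (Rle_or_lt s c) as [|H]; [auto|exfalso].
  destruct (Hl (s - c)) as [T HT]; [lra|].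
  specialize (HT (Rmax T 0) (Rmax_l _ _)). specialize (Hb (Rmax T 0) (Rmax_r _ _)).
  apply Rabs_def2 in HT. lra.
Qed.

Lemma lim_ge X s c : tends_at_infty X s -> (forall t, 0 <= t -> c <= X t) -> c <= s.
Proof.
  intros Hl Hb. destruct (Rle_or_lt c s) as [|H]; [auto|exfalso].
  destruct (Hl (c - s)) as [T HT]; [lra|].
  specialize (HT (Rmax T 0) (Rmax_l _ _)). specialize (Hb (Rmax T 0) (Rmax_r _ _)).
  apply Rabs_def2 in HT. lra.
Qed.

Lemma fixpt X f s : tends_at_infty X s ->
  (forall t, 0 < t -> derivable_pt_lim X t (f (X t))) ->
  continuity_pt f s -> f s = 0.
Proof.
  intros Hl Hd Hc. destruct (Req_dec (f s) 0) as [|Hne]; [auto|exfalso].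
  set (e := Rabs (f s)). assert (He : 0 < e) by (apply Rabs_pos_lt; auto).
  destruct (cont_eps f s Hc (e/2)) as [eta [Heta Hy]]; [lra|].
  destruct (Hl (Rmin eta 1)) as [T HT]; [apply Rmin_glb_lt; lra|].
  set (t0 := Rmax T 1). set (t2 := t0 + 4/e).
  assert (Ht0 : T <= t0 /\ 1 <= t0) by (split; [apply Rmax_l|apply Rmax_r]).
  assert (H4e : 0 < 4/e) by (apply Rdiv_lt_0_compat; lra).
  destruct (MVT_cor2 X (fun t => f (X t)) t0 t2) as [xi [Heq Hxi]].
  - unfold t2; lra.
  - intros x Hx. apply Hd. lra.
  - assert (Hm1 : Rmin eta 1 <= eta) by apply Rmin_l.
    assert (Hm2 : Rmin eta 1 <= 1) by apply Rmin_r.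
    assert (A0 := HT t0 ltac:(lra)). assert (A2 := HT t2 ltac:(unfold t2; lra)).
    assert (Ax := HT xi ltac:(lra)).
    assert (Hfx : Rabs (f (X xi) - f s) < e/2) by (apply Hy; lra).
    assert (Hbig : e/2 < Rabs (f (X xi))).
    { apply Rabs_def2 in Hfx. unfold e in *. destruct (Rle_or_lt 0 (f s)).
      - rewrite (Rabs_right (f s)) in *; try lra.
        rewrite Rabs_right; lra.
      - rewrite (Rabs_left (f s)) in *; try lra.
        rewrite Rabs_left; lra. }
    assert (Hdist : Rabs (X t2 - X t0) < 2).
    { apply Rabs_def2 in A0. apply Rabs_def2 in A2. apply Rabs_def1; lra. }
    rewrite Heq in Hdist. unfold t2 in Hdist.
    replace (t0 + 4/e - t0) with (4/e) in Hdist by ring.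
    rewrite Rabs_mult, (Rabs_right (4/e)) in Hdist by lra.
    assert (e/2 * (4/e) = 2) by (field; lra).
    assert (e/2 * (4/e) < Rabs (f (X xi)) * (4/e)) by (apply Rmult_lt_compat_r; lra).
    lra.
Qed.

Definition F (A B x : R) := A*x/(A*x + B*(1-x)).
Definition c0 (b:bool) p mu := if b then p*(1-mu) else p*mu.
Definition c1 (b:bool) p mu := if b then p*mu else p*(1-mu).
Definition c2 (b:bool) p mu := if b then (1-p)*(1-mu) else (1-p)*mu.

Lemma Fform c g h l k x : c * g * (x/l) / (g*(x/l) + h*((1-x)/k)) = c * F (g/l) (h/k) x.
Proof.
  unfold F. replace (g*(x/l) + h*((1-x)/k)) with (g/l*x + h/k*(1-x)) by (unfold Rdiv; ring).
  unfold Rdiv; ring.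
Qed.

Lemma theta_eq M L p mu g x :
  theta1 M L p mu g x =
  c0 (2*L <=? M-1)%nat p mu
  + c1 (2*L <=? M-1)%nat p mu * F (g / INR L) ((1-g)/(INR M - INR L)) x
  + c2 (2*L <=? M-1)%nat p mu * F ((1-g) / INR L) (g/(INR M - INR L)) x.
Proof.
  unfold theta1, c0, c1, c2. cbv zeta. destruct (2*L <=? M-1)%nat;
  rewrite !Fform; reflexivity.
Qed.

Lemma Fden A B x : 0 < A -> 0 < B -> 0 <= x <= 1 -> 0 < A*x + B*(1-x).
Proof. intros. destruct (Rle_or_lt x (1/2)); nra. Qed.

Lemma Fmono A B x y : 0 < A -> 0 < B -> 0 <= x -> x <= y -> y <= 1 -> F A B x <= F A B y.
Proof.
  intros HA HB H1 H2 H3. unfold F.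
  assert (Dx := Fden A B x HA HB ltac:(lra)). assert (Dy := Fden A B y HA HB ltac:(lra)).
  assert (E : A*y/(A*y + B*(1-y)) - A*x/(A*x + B*(1-x)) = A*B*(y-x)/((A*x + B*(1-x))*(A*y + B*(1-y)))) by (field; lra).
  assert (0 <= A*B*(y-x)/((A*x + B*(1-x))*(A*y + B*(1-y)))).
  { apply Rmult_le_pos. apply Rmult_le_pos; nra. left; apply Rinv_0_lt_compat; nra. }
  lra.
Qed.

Lemma Fup A B : 0 < A -> 0 < B -> exists d K, 0 < d /\ 0 <= K /\
  forall x, 1 < x < 1 + d -> F A B x <= 1 + K*(x-1).
Proof.
  intros HA HB. exists (A/(2*B)), (2*B/A). split; [apply Rdiv_lt_0_compat; lra|].
  split; [left; apply Rdiv_lt_0_compat; lra|]. intros x Hx.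
  assert (Hz : B*(x-1) < A/2).
  { destruct Hx as [_ Hx]. apply (Rmult_lt_compat_l B) in Hx; [|lra].
    replace (B * (1 + A/(2*B))) with (B + A/2) in Hx by (field; lra). lra. }
  assert (HD : A/2 <= A*x + B*(1-x)) by nra.
  unfold F.
  assert (E : A*x/(A*x + B*(1-x)) = 1 + B*(x-1)/(A*x + B*(1-x))) by (field; lra).
  rewrite E. apply Rplus_le_compat_l.
  replace (2*B/A*(x-1)) with (B*(x-1)/(A/2)) by (field; lra).
  unfold Rdiv. apply Rmult_le_compat_l; [nra|]. apply Rinv_le_contravar; lra.
Qed.

Lemma Flow A B : 0 < A -> 0 < B -> exists d K, 0 < d /\ 0 <= K /\
  forall x, -d < x < 0 -> K*x <= F A B x.
Proof.
  intros HA HB. exists (B/(2*A)), (2*A/B). split; [apply Rdiv_lt_0_compat; lra|].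
  split; [left; apply Rdiv_lt_0_compat; lra|]. intros x Hx.
  assert (Hz : - (A*x) < B/2).
  { destruct Hx as [Hx _]. apply (Rmult_lt_compat_l A) in Hx; [|lra].
    replace (A * - (B/(2*A))) with (- (B/2)) in Hx by (field; lra). lra. }
  assert (HD : B/2 <= A*x + B*(1-x)) by nra.
  unfold F.
  replace (2*A/B*x) with (A*x/(B/2)) by (field; lra).
  unfold Rdiv. 
  assert (/ (A * x + B * (1 - x)) <= / (B/2)) by (apply Rinv_le_contravar; lra).
  assert (0 < /(A * x + B * (1 - x))) by (apply Rinv_0_lt_compat; lra).
  assert (A*x < 0) by nra. nra.
Qed.

Lemma Fhom A B A' B' x y : 0 < A -> 0 < B -> 0 < A' -> 0 < B' -> 0 <= x <= 1 -> 0 <= y <= 1 ->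
  A*x*B'*(1-y) = A'*y*B*(1-x) -> F A B x = F A' B' y.
Proof.
  intros HA HB HA' HB' Hx Hy Heq. unfold F.
  assert (Dx := Fden A B x HA HB Hx). assert (Dy := Fden A' B' y HA' HB' Hy).
  apply (Rmult_eq_reg_r ((A*x + B*(1-x))*(A'*y + B'*(1-y)))); [|nra].
  field_simplify; [|lra|lra]. nra.
Qed.

Lemma BLlow (X d : R -> R) (c del K : R) :
  (forall t, 0 <= t -> RC X t) ->
  (forall t, 0 < t -> derivable_pt_lim X t (d t)) ->
  0 < del -> 0 <= K -> c <= X 0 ->
  (forall t, 0 < t -> c - del < X t < c -> K * (X t - c) <= d t) ->
  forall t, 0 <= t -> c <= X t.
Proof.
  intros HRC Hd Hdel HK H0 Hb t Ht.
  assert (H := BL (fun t => - X t) (fun t => - d t) (-c) del K).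
  cut (- X t <= - c); [lra|]. apply H; auto.
  - intros u Hu eps He. destruct (HRC u Hu eps He) as [e [He' Hy]]. exists e; split; auto.
    intros s Hs. replace (- X s - - X u) with (- (X s - X u)) by ring.
    rewrite Rabs_Ropp. auto.
  - intros u Hu. exact (derivable_pt_lim_opp X u (d u) (Hd u Hu)).
  - lra.
  - intros u Hu Hb'. assert (K * (X u - c) <= d u) by (apply Hb; auto; lra). lra.
Qed.

Lemma Lfacts M L p mu g X s :
  (1 <= L)%nat -> (L + 1 <= M)%nat -> 0 < p < 1 -> 0 < mu <= 1 -> 0 < g < 1 ->
  solves_limit_ode M L p mu g X -> tends_at_infty X s ->
  0 <= s <= 1 /\ theta1 M L p mu g s = s /\
  (forall c, INR L / INR M <= c < s -> c <= theta1 M L p mu g c) /\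
  (forall c, s < c <= INR L / INR M -> theta1 M L p mu g c <= c).
Proof.
  intros HL HLM Hp Hmu Hg [H0 [HRC0 Hd]] Hlim.
  assert (Hl : 1 <= INR L) by (replace 1 with (INR 1) by reflexivity; apply le_INR; lia).
  assert (Hml : 1 <= INR M - INR L).
  { assert (INR (L + 1) <= INR M) by (apply le_INR; lia). rewrite plus_INR in H. simpl in H. lra. }
  assert (Ha0 : 0 < INR L / INR M) by (apply Rdiv_lt_0_compat; lra).
  assert (Ha1 : INR L / INR M < 1).
  { assert (INR L / INR M * INR M = INR L) by (field; lra). nra. }
  set (b := (2*L <=? M-1)%nat).
  set (A1 := g / INR L). set (B1 := (1-g)/(INR M - INR L)).
  set (A2 := (1-g) / INR L). set (B2 := g/(INR M - INR L)).
  assert (HA1 : 0 < A1) by (apply Rdiv_lt_0_compat; lra).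
  assert (HB1 : 0 < B1) by (apply Rdiv_lt_0_compat; lra).
  assert (HA2 : 0 < A2) by (apply Rdiv_lt_0_compat; lra).
  assert (HB2 : 0 < B2) by (apply Rdiv_lt_0_compat; lra).
  set (k0 := c0 b p mu). set (k1 := c1 b p mu). set (k2 := c2 b p mu).
  assert (Hk : 0 <= k0 /\ 0 <= k1 /\ 0 <= k2 /\ k0 + k1 + k2 <= 1).
  { unfold k0, k1, k2, c0, c1, c2. destruct b; nra. }
  destruct Hk as [Hk0 [Hk1 [Hk2 Hk]]].
  assert (Hth : forall x, theta1 M L p mu g x = k0 + k1 * F A1 B1 x + k2 * F A2 B2 x)
    by (intro x; exact (theta_eq M L p mu g x)).
  set (phi := fun y => theta1 M L p mu g y - y).
  assert (Hcont : forall x, 0 <= x <= 1 -> continuity_pt phi x).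
  { intros x Hx.
    assert (E : phi = fun y => k0 + k1 * (A1*y/(A1*y + B1*(1-y))) + k2 * (A2*y/(A2*y + B2*(1-y))) - y).
    { apply functional_extensionality. intro y. unfold phi. rewrite Hth. reflexivity. }
    rewrite E. assert (D1 := Fden A1 B1 x HA1 HB1 Hx). assert (D2 := Fden A2 B2 x HA2 HB2 Hx).
    reg; lra. }
  assert (HRC : forall t, 0 <= t -> RC X t).
  { intros t Ht. destruct (Req_dec t 0) as [->|Hne].
    - intros eps He. destruct (HRC0 eps He) as [del [Hdel Hy]]. exists del; split; auto.
      intros u Hu. apply Hy. lra.
    - apply cont_RC. apply derivable_continuous_pt. exists (theta1 M L p mu g (X t) - X t).
      apply Hd. lra. }
  set (d := fun t => theta1 M L p mu g (X t) - X t).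
  assert (Hd' : forall t, 0 < t -> derivable_pt_lim X t (d t)) by exact Hd.
  assert (Hs1 : s <= 1).
  { destruct (Fup A1 B1 HA1 HB1) as [d1 [K1 [Hd1 [HK1 HF1]]]].
    destruct (Fup A2 B2 HA2 HB2) as [d2 [K2 [Hd2 [HK2 HF2]]]].
    apply (lim_le X s 1 Hlim).
    apply (BL X d 1 (Rmin d1 d2) (k1*K1 + k2*K2) HRC Hd').
    - apply Rmin_glb_lt; lra.
    - nra.
    - rewrite H0; lra.
    - intros t Ht Hb. unfold d. rewrite Hth.
      assert (Rmin d1 d2 <= d1) by apply Rmin_l. assert (Rmin d1 d2 <= d2) by apply Rmin_r.
      assert (F A1 B1 (X t) <= 1 + K1 * (X t - 1)) by (apply HF1; lra).
      assert (F A2 B2 (X t) <= 1 + K2 * (X t - 1)) by (apply HF2; lra).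
      assert (k1 * F A1 B1 (X t) <= k1 * (1 + K1 * (X t - 1))) by (apply Rmult_le_compat_l; lra).
      assert (k2 * F A2 B2 (X t) <= k2 * (1 + K2 * (X t - 1))) by (apply Rmult_le_compat_l; lra).
      nra. }
  assert (Hs0 : 0 <= s).
  { destruct (Flow A1 B1 HA1 HB1) as [d1 [K1 [Hd1 [HK1 HF1]]]].
    destruct (Flow A2 B2 HA2 HB2) as [d2 [K2 [Hd2 [HK2 HF2]]]].
    apply (lim_ge X s 0 Hlim).
    apply (BLlow X d 0 (Rmin d1 d2) (k1*K1 + k2*K2) HRC Hd').
    - apply Rmin_glb_lt; lra.
    - nra.
    - rewrite H0; lra.
    - intros t Ht Hb. unfold d. rewrite Hth.
      assert (Rmin d1 d2 <= d1) by apply Rmin_l. assert (Rmin d1 d2 <= d2) by apply Rmin_r.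
      assert (K1 * X t <= F A1 B1 (X t)) by (apply HF1; lra).
      assert (K2 * X t <= F A2 B2 (X t)) by (apply HF2; lra).
      assert (k1 * (K1 * X t) <= k1 * F A1 B1 (X t)) by (apply Rmult_le_compat_l; lra).
      assert (k2 * (K2 * X t) <= k2 * F A2 B2 (X t)) by (apply Rmult_le_compat_l; lra).
      nra. }
  split; [lra|]. split.
  { assert (phi s = 0). { apply (fixpt X phi s Hlim Hd'). apply Hcont; lra. }
    unfold phi in H. lra. }
  split.
  - intros c [Hc1 Hc2]. destruct (Rle_or_lt c (theta1 M L p mu g c)) as [|Hlt]; [auto|exfalso].
    destruct (cont_eps phi c (Hcont c ltac:(lra)) (c - theta1 M L p mu g c)) as [eta [Heta Hy]]; [lra|].
    assert (s <= c); [|lra].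
    apply (lim_le X s c Hlim).
    apply (BL X d c eta 0 HRC Hd' Heta ltac:(lra)).
    + rewrite H0; lra.
    + intros t Ht Hb. assert (Hq : Rabs (phi (X t) - phi c) < c - theta1 M L p mu g c).
      { apply Hy. rewrite Rabs_right; lra. }
      apply Rabs_def2 in Hq. unfold phi in Hq. unfold d. lra.
  - intros c [Hc1 Hc2]. destruct (Rle_or_lt (theta1 M L p mu g c) c) as [|Hlt]; [auto|exfalso].
    destruct (cont_eps phi c (Hcont c ltac:(lra)) (theta1 M L p mu g c - c)) as [eta [Heta Hy]]; [lra|].
    assert (c <= s); [|lra].
    apply (lim_ge X s c Hlim).
    apply (BLlow X d c eta 0 HRC Hd' Heta ltac:(lra)).
    + rewrite H0; lra.
    + intros t Ht Hb. assert (Hq : Rabs (phi (X t) - phi c) < theta1 M L p mu g c - c).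
      { apply Hy. rewrite Rabs_left; lra. }
      apply Rabs_def2 in Hq. unfold phi in Hq. unfold d. lra.
Qed.

Lemma compare M L p mu g s s' :
  (1 <= L)%nat -> (L + 2 <= M)%nat ->
  (2*L <=? M-1)%nat = (2*S L <=? M-1)%nat ->
  0 < p < 1 -> 0 < mu <= 1 -> 0 < g < 1 ->
  0 <= s <= 1 /\ theta1 M L p mu g s = s /\
  (forall c, INR L / INR M <= c < s -> c <= theta1 M L p mu g c) /\
  (forall c, s < c <= INR L / INR M -> theta1 M L p mu g c <= c) ->
  0 <= s' <= 1 /\ theta1 M (S L) p mu g s' = s' /\
  (forall c, INR (S L) / INR M <= c < s' -> c <= theta1 M (S L) p mu g c) /\
  (forall c, s' < c <= INR (S L) / INR M -> theta1 M (S L) p mu g c <= c) ->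
  s' <= s.
Proof.
  intros HL HLM Hb Hp Hmu Hg [Hs [Hfs [P2 P2']]] [Hs' [Hfs' [Q2 Q2']]].
  rewrite S_INR in *.
  set (l := INR L) in *. set (m := INR M) in *.
  assert (Hl : 1 <= l) by (unfold l; replace 1 with (INR 1) by reflexivity; apply le_INR; lia).
  assert (Hml : 1 <= m - l - 1).
  { assert (INR (L + 2) <= INR M) by (apply le_INR; lia). rewrite plus_INR in H. simpl in H.
    unfold m, l. lra. }
  set (b := (2*L <=? M-1)%nat) in *.
  set (k0 := c0 b p mu). set (k1 := c1 b p mu). set (k2 := c2 b p mu).
  assert (Hk : 0 <= k0 /\ 0 <= k1 /\ 0 <= k2).
  { unfold k0, k1, k2, c0, c1, c2. destruct b; nra. }
  destruct Hk as [Hk0 [Hk1 Hk2]].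
  set (A1 := g / l). set (B1 := (1-g)/(m - l)).
  set (A2 := (1-g) / l). set (B2 := g/(m - l)).
  set (A1' := g / (l+1)). set (B1' := (1-g)/(m - (l+1))).
  set (A2' := (1-g) / (l+1)). set (B2' := g/(m - (l+1))).
  assert (HA1 : 0 < A1) by (apply Rdiv_lt_0_compat; lra).
  assert (HB1 : 0 < B1) by (apply Rdiv_lt_0_compat; lra).
  assert (HA2 : 0 < A2) by (apply Rdiv_lt_0_compat; lra).
  assert (HB2 : 0 < B2) by (apply Rdiv_lt_0_compat; lra).
  assert (HA1' : 0 < A1') by (apply Rdiv_lt_0_compat; lra).
  assert (HB1' : 0 < B1') by (apply Rdiv_lt_0_compat; lra).
  assert (HA2' : 0 < A2') by (apply Rdiv_lt_0_compat; lra).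
  assert (HB2' : 0 < B2') by (apply Rdiv_lt_0_compat; lra).
  assert (HT : forall x, theta1 M L p mu g x = k0 + k1 * F A1 B1 x + k2 * F A2 B2 x)
    by (intro x; exact (theta_eq M L p mu g x)).
  assert (HT' : forall x, theta1 M (S L) p mu g x = k0 + k1 * F A1' B1' x + k2 * F A2' B2' x).
  { intro x. rewrite theta_eq, <- Hb, S_INR. reflexivity. }
  set (T := theta1 M L p mu g) in *. set (T' := theta1 M (S L) p mu g) in *.
  assert (Hmono : forall x y, 0 <= x -> x <= y -> y <= 1 -> T x <= T y).
  { intros x y H1 H2 H3. rewrite !HT.
    assert (F A1 B1 x <= F A1 B1 y) by (apply Fmono; auto).
    assert (F A2 B2 x <= F A2 B2 y) by (apply Fmono; auto).
    assert (k1 * F A1 B1 x <= k1 * F A1 B1 y) by (apply Rmult_le_compat_l; auto).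
    assert (k2 * F A2 B2 x <= k2 * F A2 B2 y) by (apply Rmult_le_compat_l; auto). lra. }
  assert (Hmono' : forall x y, 0 <= x -> x <= y -> y <= 1 -> T' x <= T' y).
  { intros x y H1 H2 H3. rewrite !HT'.
    assert (F A1' B1' x <= F A1' B1' y) by (apply Fmono; auto).
    assert (F A2' B2' x <= F A2' B2' y) by (apply Fmono; auto).
    assert (k1 * F A1' B1' x <= k1 * F A1' B1' y) by (apply Rmult_le_compat_l; auto).
    assert (k2 * F A2' B2' x <= k2 * F A2' B2' y) by (apply Rmult_le_compat_l; auto). lra. }
  assert (Hhom : forall x y, 0 <= x <= 1 -> 0 <= y <= 1 ->
     x*(1-y)*(l+1)*(m-l) = y*(1-x)*l*(m-l-1) -> T x = T' y).
  { intros x y Hx Hy Heq. rewrite HT, HT'.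
    assert (E1 : F A1 B1 x = F A1' B1' y).
    { apply Fhom; auto.
      assert (Ea : A1*x*B1'*(1-y) = g*(1-g)/(l*(l+1)*(m-l)*(m-l-1)) * (x*(1-y)*(l+1)*(m-l))).
      { unfold A1, B1'. field. repeat split; lra. }
      assert (Eb : A1'*y*B1*(1-x) = g*(1-g)/(l*(l+1)*(m-l)*(m-l-1)) * (y*(1-x)*l*(m-l-1))).
      { unfold A1', B1. field. repeat split; lra. }
      rewrite Ea, Eb, Heq. reflexivity. }
    assert (E2 : F A2 B2 x = F A2' B2' y).
    { apply Fhom; auto.
      assert (Ea : A2*x*B2'*(1-y) = g*(1-g)/(l*(l+1)*(m-l)*(m-l-1)) * (x*(1-y)*(l+1)*(m-l))).
      { unfold A2, B2'. field. repeat split; lra. }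
      assert (Eb : A2'*y*B2*(1-x) = g*(1-g)/(l*(l+1)*(m-l)*(m-l-1)) * (y*(1-x)*l*(m-l-1))).
      { unfold A2', B2. field. repeat split; lra. }
      rewrite Ea, Eb, Heq. reflexivity. }
    rewrite E1, E2. reflexivity. }
  assert (Hm : 0 < m) by lra.
  assert (Ha : 0 < l/m < 1).
  { split. apply Rdiv_lt_0_compat; lra. assert (l/m*m = l) by (field; lra). nra. }
  assert (Ha' : l/m < (l+1)/m < 1).
  { assert (l/m*m = l) by (field; lra). assert ((l+1)/m*m = l+1) by (field; lra). split; nra. }
  destruct (Rle_or_lt s' s) as [|Hlt]; [auto|exfalso].
  destruct (Rle_or_lt (l/m) s) as [Hsa|Hsa].
  -
    set (Den := (l+1)*s*(m-l) + l*(1-s)*(m-l-1)).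
    assert (Hs0 : 0 < s) by lra. assert (Hs1 : s < 1) by lra.
    assert (HDen : 0 < Den).
    { unfold Den. assert (0 < (l+1)*s*(m-l)) by (apply Rmult_lt_0_compat; [apply Rmult_lt_0_compat|]; lra).
      assert (0 <= l*(1-s)*(m-l-1)) by (apply Rmult_le_pos; [apply Rmult_le_pos|]; lra). lra. }
    set (c := (l+1)*s*(m-l)/Den).
    assert (Hc0 : 0 <= c) by (unfold c; apply Rmult_le_pos; [repeat apply Rmult_le_pos; lra| left; apply Rinv_0_lt_compat; lra]).
    assert (Ec1 : 1 - c = l*(1-s)*(m-l-1)/Den) by (unfold c, Den; field; unfold Den in HDen; repeat split; lra).
    assert (0 <= l*(1-s)*(m-l-1)/Den) by (apply Rmult_le_pos; [repeat apply Rmult_le_pos; lra| left; apply Rinv_0_lt_compat; lra]).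
    assert (Ecs : c - s = s*(1-s)*m/Den) by (unfold c, Den; field; unfold Den in HDen; repeat split; lra).
    assert (0 < s*(1-s)*m/Den) by (apply Rdiv_lt_0_compat; [|lra]; assert (0 < s*(1-s)) by nra; nra).
    assert (Eca : c - (l+1)/m = (l+1)*(m-l-1)*(s*m - l)/(m*Den)) by (unfold c, Den; field; unfold Den in HDen; repeat split; lra).
    assert (s*m - l >= 0). { assert (l/m*m = l) by (field; lra). nra. }
    assert (0 <= (l+1)*(m-l-1)*(s*m - l)/(m*Den)).
    { apply Rmult_le_pos; [|left; apply Rinv_0_lt_compat; nra].
      apply Rmult_le_pos; nra. }
    assert (Hhc : T s = T' c).
    { apply Hhom; [lra|lra|]. unfold c, Den. field. unfold Den in HDen; repeat split; lra. }
    assert (Hcs' : c < s').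
    { destruct (Rle_or_lt s' c) as [Hle|]; [|auto]. exfalso.
      assert (T' s' <= T' c) by (apply Hmono'; lra). lra. }
    assert (c <= T' c) by (apply Q2; lra). lra.
  - destruct (Rle_or_lt ((l+1)/m) s') as [Hsa'|Hsa'].
    + assert (Hq : (l+1)/m <= T' ((l+1)/m)).
      { destruct (Req_dec s' ((l+1)/m)) as [<-|Hne]; [lra|]. apply Q2; lra. }
      assert (Hp2 : T (l/m) <= l/m) by (apply P2'; lra).
      assert (T (l/m) = T' ((l+1)/m)).
      { apply Hhom; [lra|lra|]. field. lra. }
      lra.
    + set (Den := (1-s')*(l+1)*(m-l) + s'*l*(m-l-1)).
      assert (Hs0 : 0 < s') by lra. assert (Hs1 : s' < 1) by lra.
      assert (HDen : 0 < Den).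
      { unfold Den. assert (0 < (1-s')*(l+1)*(m-l)) by (apply Rmult_lt_0_compat; [apply Rmult_lt_0_compat|]; lra).
        assert (0 <= s'*l*(m-l-1)) by (apply Rmult_le_pos; [apply Rmult_le_pos|]; lra). lra. }
      set (c := s'*l*(m-l-1)/Den).
      assert (Hc0 : 0 <= c) by (unfold c; apply Rmult_le_pos; [repeat apply Rmult_le_pos; lra| left; apply Rinv_0_lt_compat; lra]).
      assert (Ec1 : 1 - c = (1-s')*(l+1)*(m-l)/Den) by (unfold c, Den; field; unfold Den in HDen; repeat split; lra).
      assert (0 <= (1-s')*(l+1)*(m-l)/Den) by (apply Rmult_le_pos; [repeat apply Rmult_le_pos; lra| left; apply Rinv_0_lt_compat; lra]).
      assert (Ecs : c - s' = - (s'*(1-s')*m/Den)) by (unfold c, Den; field; unfold Den in HDen; repeat split; lra).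
      assert (0 < s'*(1-s')*m/Den) by (apply Rdiv_lt_0_compat; [|lra]; assert (0 < s'*(1-s')) by nra; nra).
      assert (Eca : c - l/m = l*(m-l)*(s'*m - (l+1))/(m*Den)) by (unfold c, Den; field; unfold Den in HDen; repeat split; lra).
      assert (s'*m - (l+1) < 0). { assert ((l+1)/m*m = l+1) by (field; lra). nra. }
      assert ((l*(m-l)*(s'*m - (l+1)))/(m*Den) < 0).
      { apply Ropp_lt_cancel. rewrite Ropp_0. unfold Rdiv. rewrite Ropp_mult_distr_l.
        apply Rmult_lt_0_compat; [|apply Rinv_0_lt_compat; nra].
        replace (- (l*(m-l)*(s'*m-(l+1)))) with ((l*(m-l))*((l+1) - s'*m)) by ring.
        apply Rmult_lt_0_compat; [apply Rmult_lt_0_compat|]; lra. }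
      assert (Hhc : T c = T' s').
      { apply Hhom; [lra|lra|]. unfold c, Den. field. unfold Den in HDen; repeat split; lra. }
      assert (Hcs : s < c).
      { destruct (Rle_or_lt c s) as [Hle|]; [|auto]. exfalso.
        assert (T c <= T s) by (apply Hmono; lra). lra. }
      assert (T c <= c) by (apply P2'; lra). lra.
Qed.

Theorem proposition1 (M : nat) (p q mu gamma : R) (P : nat -> R) :
  (3 <= M)%nat -> Nat.odd M = true ->
  1/2 < p < 1 -> 1/2 < q < 1 -> 1/2 < mu <= 1 -> mu * q > p ->
  0 < gamma < 1 ->
  is_limit_efficiency M p mu gamma P ->
  forall j : nat, (1 <= j <= M - 2)%nat -> j <> ((M - 1) / 2)%nat ->
    Qcorr P (S j) <= Qcorr P j /\ Qinc M P (S j) <= Qinc M P j.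
Proof.
  intros HM Hodd Hp Hq Hmu Hmq Hg [HP0 [HPM HPL]] j Hj Hjn.
  apply Nat.odd_spec in Hodd. destruct Hodd as [n Hn].
  assert (Hdiv : ((M - 1) / 2 = n)%nat).
  { replace (M - 1)%nat with (n * 2)%nat by lia. apply Nat.div_mul. lia. }
  rewrite Hdiv in Hjn.
  assert (key : forall L, (1 <= L)%nat -> (L + 2 <= M)%nat -> L <> n -> P (S L) <= P L).
  { intros L H1 H2 H3.
    destruct (HPL L ltac:(lia)) as [X [HX HXl]].
    destruct (HPL (S L) ltac:(lia)) as [Y [HY HYl]].
    apply (compare M L p mu gamma); auto; try lra.
    - destruct (Nat.leb_spec (2*L) (M-1)); destruct (Nat.leb_spec (2 * S L) (M-1)); auto; lia.
    - apply (Lfacts M L p mu gamma X); auto; try lra; lia.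
    - apply (Lfacts M (S L) p mu gamma Y); auto; try lra; lia. }
  split.
  - unfold Qcorr. apply key; lia.
  - unfold Qinc. replace (M - j)%nat with (S (M - S j)) by lia.
    assert (P (S (M - S j)%nat) <= P (M - S j)%nat) by (apply key; lia). lra.
Qed.
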